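(* The short exact sequence $1\to\mathrm{Sym}(\{0,1\}^* )\to QF\xrightarrow{\pi} F\to 1$ splits.
   Context: Let $\{0,1\}^*$ be the finite words over $\{0,1\}$, the vertices of the rooted binary tree in which $x$ has children $x0$ and $x1$ (two edge colours). $QV$ is the group of bijections $\tau$ of $\{0,1\}^*$ with $\tau(x0)=\tau(x)0$ and $\tau(x1)=\tau(x)1$ for all but finitely many $x$. Each such $\tau$ induces a homeomorphism $\pi(\tau)$ of $\{0,1\}^{\mathbb N}$ by $\pi(\tau)(\ell\omega)=\tau(\ell)\omega$, for $\ell$ in a finite maximal prefix-antichain $L$ with $\tau(\ell s)=\tau(\ell)s$ for all $\ell\in L$ and words $s$; this gives a surjective homomorphism $\pi$ onto Thompson's group $V$ whose kernel is $\mathrm{Sym}(\{0,1\}^* )$, the finitely supported permutations. Thompson's group $F\le V$ consists of the lexicographic-order-preserving elements, $QF=\pi^{-1}(F)$, and $\pi$ also denotes the restriction $QF\to F$. *)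

(* Defs.v *)
From mathcomp Require Import all_boot.
Set Implicit Arguments. Unset Strict Implicit. Unset Printing Implicit Defensive.

(* Vertices of the rooted binary tree: finite words over {0,1} = {false,true};
   the children of x are x0 = rcons x false and x1 = rcons x true. *)
Definition word := seq bool.
Definition cantor := nat -> bool.

Definition wcat (l : word) (w : cantor) : cantor :=
  fun n => if n < size l then nth false l n else w (n - size l).

Definition QV (tau : word -> word) : Prop :=
  bijective tau /\
  exists S : seq word, forall x : word, x \notin S ->
    forall b : bool, tau (rcons x b) = rcons (tau x) b.

Definition comparable_w (u v : word) : bool := prefix u v || prefix v u.

Definition max_antichain (L : seq word) : Prop :=
  uniq L /\
  (forall u v, u \in L -> v \in L -> u != v -> ~~ comparable_w u v) /\
  (forall w : word, exists2 l, l \in L & comparable_w l w).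

(* g = pi(tau): there is a finite maximal prefix-antichain L with
   tau(l s) = tau(l) s for all l in L and words s, and g(l omega) = tau(l) omega. *)
Definition induces (tau : word -> word) (g : cantor -> cantor) : Prop :=
  exists L : seq word, max_antichain L /\
    (forall l s, l \in L -> tau (l ++ s) = tau l ++ s) /\
    (forall l (w : cantor), l \in L -> g (wcat l w) = wcat (tau l) w).

Definition ThompsonV (g : cantor -> cantor) : Prop :=
  exists tau, QV tau /\ induces tau g.

Definition lex_lt (w w' : cantor) : Prop :=
  exists n, (forall i, i < n -> w i = w' i) /\ w n = false /\ w' n = true.

Definition ThompsonF (g : cantor -> cantor) : Prop :=
  ThompsonV g /\ forall w w', lex_lt w w' -> lex_lt (g w) (g w').

Definition QF (tau : word -> word) : Prop :=
  QV tau /\ exists g, induces tau g /\ ThompsonF g.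

(* Main.v *)
Require Import Defs.
From mathcomp Require Import all_boot zify.
From Stdlib Require Import Classical ClassicalEpsilon FunctionalExtensionality.
Set Implicit Arguments. Unset Strict Implicit.

Definition ones : cantor := fun _ => true.
Definition pt (x : word) : cantor := wcat (rcons x false) ones.
Definition ptR (x : word) : cantor := wcat (rcons x true) (fun _ => false).
Definition sec (g : cantor -> cantor) (x : word) : word :=
  epsilon (inhabits x) (fun y => g (pt x) = pt y).

Lemma wcat_cat l m w : wcat l (wcat m w) = wcat (l ++ m) w.
Proof.
apply: functional_extensionality => n; rewrite /wcat size_cat nth_cat.
case: (ltnP n (size l)) => H1.
  by rewrite (leq_trans H1 (leq_addr _ _)).
rewrite ltn_subLR // subnDA; case: ltnP => //.
Qed.

Lemma wcat0 w : wcat [::] w = w.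
Proof. by apply: functional_extensionality => n; rewrite /wcat subn0. Qed.

Lemma pt_inj : injective pt.
Proof.
have key : forall a b : word, pt a = pt b -> size b <= size a.
  move=> a b Eab; rewrite leqNgt; apply/negP => Hlt.
  have := congr1 (fun f => f (size b)) Eab; rewrite /pt /wcat !size_rcons.
  rewrite ltnSn ltnS leqNgt Hlt /= nth_rcons ltnn eqxx //.
move=> x y E.
have Hs : size x = size y by apply/eqP; rewrite eqn_leq key // key.
apply: (@eq_from_nth _ false) => // i Hi.
have := congr1 (fun f => f i) E; rewrite /pt /wcat !size_rcons -Hs ltnS (ltnW Hi).
by rewrite !nth_rcons -Hs Hi.
Qed.
Lemma lex_irr w : ~ lex_lt w w.
Proof. by case=> n [_ [-> ]]. Qed.

Lemma lex_total w w' : w <> w' -> lex_lt w w' \/ lex_lt w' w.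
Proof.
move=> E.
have ex : exists n, w n != w' n.
  apply: NNPP => H; apply: E; apply: functional_extensionality => n.
  by apply/eqP; apply: negbNE; apply/negP => H2; apply: H; exists n.
case: (ex_minnP ex) => n Hn Hmin.
have Heq : forall i, i < n -> w i = w' i.
  move=> i Hi; apply/eqP; apply: negbNE; apply/negP => Hne.
  by have := Hmin i Hne; rewrite leqNgt Hi.
move: Hn; case Ew: (w n); case Ew': (w' n) => // _.
  by right; exists n; split=> // i Hi; rewrite Heq.
by left; exists n.
Qed.

Lemma F_inj g : (forall w w', lex_lt w w' -> lex_lt (g w) (g w')) -> injective g.
Proof.
move=> Hg w w' E; apply: NNPP => Ne.
case: (@lex_total w w' Ne) => /Hg; rewrite E; exact: lex_irr.
Qed.

Lemma ptlt x : lex_lt (pt x) (ptR x).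
Proof.
exists (size x); rewrite /pt /ptR /wcat !size_rcons ltnSn !nth_rcons ltnn eqxx.
split=> // i Hi; rewrite ltnS (ltnW Hi) !nth_rcons Hi //.
Qed.

Lemma tail_form z : wcat z ones = ones \/ exists y, wcat z ones = pt y.
Proof.
elim/last_ind: z => [|z b IH]; first by left; rewrite wcat0.
rewrite -cats1 -wcat_cat; case: b.
  have -> : wcat [:: true] ones = ones.
    by apply: functional_extensionality => n; rewrite /wcat; case: n.
  exact: IH.
by right; exists z; rewrite /pt wcat_cat cats1.
Qed.

Lemma cover_bound (L : seq word) l : l \in L -> size l <= sumn (map size L).
Proof.
elim: L => //= a L IH; rewrite in_cons => /orP [/eqP -> | /IH H].
  exact: leq_addr.
exact: leq_trans H (leq_addl _ _).
Qed.

Lemma exist_pt g : ThompsonF g -> forall x, exists y, g (pt x) = pt y.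
Proof.
move=> [[tau [_ [L [[_ [_ Hcov]] [_ Hg]]]]] Hlex] x.
set m := sumn (map size L).
set w0 := rcons x false ++ nseq m true.
have [l Hl Hc] := Hcov w0.
have Hpre : prefix l w0.
  move: Hc; rewrite /comparable_w => /orP [//|Hp].
  have := size_prefix Hp; rewrite /w0 size_cat size_rcons size_nseq.
  have := @cover_bound L l Hl; rewrite -/m => H1 H2.
  have := leq_trans H2 H1; lia.
case/prefixP: Hpre => r Er.
have Hpt : pt x = wcat l (wcat r ones).
  rewrite wcat_cat -Er /pt /w0 -wcat_cat; congr wcat.
  apply: functional_extensionality => n; rewrite /wcat /ones size_nseq nth_nseq.
  by case: (n < m).
rewrite Hpt (Hg _ _ Hl) wcat_cat.
case: (tail_form (tau l ++ r)) => // E.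
have := Hlex _ _ (ptlt x); rewrite Hpt (Hg _ _ Hl) wcat_cat E.
by case=> n [_ []].
Qed.

Lemma sec_spec g : ThompsonF g -> forall x, g (pt x) = pt (sec g x).
Proof. move=> HF x; exact: (epsilon_spec (inhabits x) (fun y => g (pt x) = pt y) (exist_pt HF x)). Qed.

Lemma sec_inj g : ThompsonF g -> injective (sec g).
Proof.
move=> HF x y E; apply: pt_inj; apply: (F_inj HF.2); by rewrite !sec_spec // E.
Qed.

Definition Bset (L : seq word) : seq word :=
  flatten [seq [seq take i l | i <- iota 0 (size l)] | l <- L].

Lemma decomp (L : seq word) :
  (forall w, exists2 l, l \in L & comparable_w l w) ->
  forall x, (exists l s, l \in L /\ x = l ++ s) \/ x \in Bset L.
Proof.
move=> Hcov x; have [l Hl] := Hcov x; rewrite /comparable_w => /orP [/prefixP [s ->]|Hp].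
  by left; exists l, s.
case: (ltnP (size x) (size l)) => Hs.
  right; apply/flattenP; exists [seq take i l | i <- iota 0 (size l)].
    by apply/mapP; exists l.
  apply/mapP; exists (size x); first by rewrite mem_iota.
  by move: Hp; rewrite prefixE => /eqP.
left; exists l, [::]; split => //; rewrite cats0.
have Hs2 := size_prefix Hp.
have Es : size x = size l by apply/eqP; rewrite eqn_leq Hs2 Hs.
by move: Hp; rewrite prefixE Es take_size => /eqP.
Qed.

Theorem lemma2p5 :
  exists s : (cantor -> cantor) -> (word -> word),
    (forall g, ThompsonF g -> QF (s g) /\ induces (s g) g) /\
    (forall g h, ThompsonF g -> ThompsonF h ->
       forall x : word, s (g \o h) x = s g (s h x)).
Proof.
exists sec; split; last first.
  move=> g h Hg Hh x.
  have E : (g \o h) (pt x) = pt (sec g (sec h x)) by rewrite /= !sec_spec.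
  apply: pt_inj.
  have := epsilon_spec (inhabits x) (fun y => (g \o h) (pt x) = pt y) (ex_intro _ _ E).
  change (epsilon (inhabits x) (fun y => (g \o h) (pt x) = pt y)) with (sec (g \o h) x).
  by move=> <-.
move=> g HF; have HF' := HF.
case: HF' => [[tau [[[tinv Hc1 Hc2] _] [L [[HU [HA Hcov]] [Htau Hg]]]]] Hlex].
have Hsc : forall l s, l \in L -> sec g (l ++ s) = tau l ++ s.
  move=> l s Hl; apply: pt_inj; rewrite -sec_spec // /pt -cats1 -catA -wcat_cat.
  by rewrite Hg // wcat_cat catA cats1.
have Hsl : forall l, l \in L -> sec g l = tau l.
  by move=> l Hl; have := Hsc l [::] Hl; rewrite !cats0.
have Hind : induces (sec g) g.
  exists L; split; first by split.
  split; first by move=> l s Hl; rewrite Hsc // Hsl.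
  by move=> l w Hl; rewrite Hg // Hsl.
split=> //; split; last by exists g.
split; last first.
  exists (Bset L) => x Hx b.
  case: (decomp Hcov x) => [[l [s [Hl ->]]]|]; last by rewrite (negbTE Hx).
  by rewrite rcons_cat Hsc // Hsc // rcons_cat.
set U := undup (Bset L).
have Hsurj : forall y, exists x, sec g x = y.
  move=> y; case: (decomp Hcov (tinv y)) => [[l [s [Hl E]]]|Hby].
    by exists (tinv y); rewrite E Hsc // -Htau // -E Hc2.
  have Hsub : {subset map (sec g) U <= map tau U}.
    move=> z /mapP [b Hb ->]; rewrite mem_undup in Hb.
    case: (decomp Hcov (tinv (sec g b))) => [[l [s [Hl E]]]|Hb2].
      have : sec g (tinv (sec g b)) = sec g b by rewrite E Hsc // -Htau // -E Hc2.
      move/(sec_inj HF) => E2.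
      apply/mapP; exists b; first by rewrite mem_undup.
      by rewrite -[in RHS]E2 Hc2.
    by apply/mapP; exists (tinv (sec g b)); [rewrite mem_undup | rewrite Hc2].
  have Hu : uniq (map (sec g) U) by rewrite (map_inj_uniq (sec_inj HF)) undup_uniq.
  have Hsz : size (map tau U) <= size (map (sec g) U) by rewrite !size_map.
  have [_ Heq] := uniq_min_size Hu Hsub Hsz.
  have : y \in map tau U by apply/mapP; exists (tinv y); [rewrite mem_undup | rewrite Hc2].
  by rewrite -Heq => /mapP [x _ ->]; exists x.
exists (fun y => epsilon (inhabits y) (fun x => sec g x = y)).
  move=> x; apply: (sec_inj HF); exact: (epsilon_spec _ (fun _ => _) (Hsurj (sec g x))).
move=> y; exact: (epsilon_spec _ (fun _ => _) (Hsurj y)).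
Qed.
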